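(* Assume $\mathrm{char}\,K\neq 2$ and that $\mathcal H(D_n)$ and $\mathcal H(D_{n-1})$ are split over $K$. Then for every $\lambda\in\mathcal P_n$, $$\mathrm{soc}\bigl(\tilde D^{\lambda}\!\downarrow_{\mathcal H(D_{n-1})}\bigr)=\Bigl(\mathrm{soc}\bigl(\tilde D^{\lambda}\!\downarrow_{\mathcal H(B_{n-1})}\bigr)\Bigr)\!\downarrow_{\mathcal H(D_{n-1})}$$ as subspaces of $\tilde D^\lambda$.
   Context: Let $K$ be a field with $\mathrm{char}\,K\neq2$ and $q\in K^\times$. $\mathcal H(B_n)$ is the $K$-algebra with generators $T_0,\dots,T_{n-1}$ and relations $T_0^2=1$; $(T_i+1)(T_i-q)=0$ for $1\le i\le n-1$; $T_0T_1T_0T_1=T_1T_0T_1T_0$; $T_iT_{i+1}T_i=T_{i+1}T_iT_{i+1}$ for $1\le i\le n-2$; $T_iT_j=T_jT_i$ for $0\le i<j-1\le n-2$. $\mathcal H(D_n)$ is the subalgebra generated by $T_u:=T_0T_1T_0,T_1,\dots,T_{n-1}$ (a Hecke algebra of type $D_n$). $\mathcal H(B_{n-1})$ and $\mathcal H(D_{n-1})$ are the subalgebras defined in the same way using only generators with indices $\le n-2$. For each bipartition $\lambda$ of $n$, $\tilde S^\lambda$ is the Dipper–James–Mathas Specht module of $\mathcal H(B_n)$ and $\tilde D^\lambda$ is its quotient by the radical of its canonical bilinear form; $\mathcal P_n:=\{\lambda:\tilde D^\lambda\neq0\}$, and $\{\tilde D^\lambda:\lambda\in\mathcal P_n\}$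 is a complete set of pairwise non-isomorphic simple $\mathcal H(B_n)$-modules. $\mathrm{soc}$ denotes the socle and $\downarrow$ restriction. *)

(* Defs.v *)
(* Modules of the finitely presented Hecke algebras are
   encoded as matrix representations: a (finite-dimensional, right)
   H-module structure on K^d (row vectors, v . T_i := v *m t i) is exactly a
   family of d x d matrices satisfying the defining relations.
   Subspaces of K^d are represented by row spaces of square matrices. *)
From HB Require Import structures.
From mathcomp Require Import all_boot all_order all_algebra.
Set Implicit Arguments.
Unset Strict Implicit.
Unset Printing Implicit Defensive.
Import GRing.Theory.
Local Open Scope ring_scope.

Section Hecke.
Variables (K : fieldType) (q : K) (d : nat).

Definition HB_rel (n : nat) (t : nat -> 'M[K]_d) : Prop :=
  [/\ (0 < n)%N -> t 0%N *m t 0%N = 1%:M,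
      forall i, (1 <= i < n)%N -> (t i + 1%:M) *m (t i - q%:M) = 0,
      (2 <= n)%N -> t 0%N *m t 1%N *m t 0%N *m t 1%N = t 1%N *m t 0%N *m t 1%N *m t 0%N,
      forall i, (1 <= i)%N -> (i.+2 <= n)%N ->
        t i *m t i.+1 *m t i = t i.+1 *m t i *m t i.+1
    & forall i j, (i.+1 < j < n)%N -> t i *m t j = t j *m t i].

Definition Bgens (m : nat) (t : nat -> 'M[K]_d) : seq 'M[K]_d :=
  [seq t i | i <- iota 0 m].

(* Generators T_u := T_0 T_1 T_0, T_1, ..., T_{m-1} of the subalgebra
   H(D_m) of H(B_m), acting through t (H(D_m) = K when m <= 1). *)
Definition Dgens_in_B (m : nat) (t : nat -> 'M[K]_d) : seq 'M[K]_d :=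
  if (2 <= m)%N then (t 0%N *m t 1%N *m t 0%N) :: [seq t i | i <- iota 1 m.-1]
  else [::].

Definition HD_rel (m : nat) (u : 'M[K]_d) (t : nat -> 'M[K]_d) : Prop :=
  (2 <= m)%N ->
  [/\ (u + 1%:M) *m (u - q%:M) = 0,
      forall i, (1 <= i < m)%N -> (t i + 1%:M) *m (t i - q%:M) = 0,
      (u *m t 1%N = t 1%N *m u /\ ((3 <= m)%N -> u *m t 2%N *m u = t 2%N *m u *m t 2%N) /\
       (forall j, (3 <= j < m)%N -> u *m t j = t j *m u)),
      forall i, (1 <= i)%N -> (i.+2 <= m)%N ->
        t i *m t i.+1 *m t i = t i.+1 *m t i *m t i.+1
    & forall i j, (1 <= i)%N -> (i.+1 < j < m)%N -> t i *m t j = t j *m t i].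

Definition Dgens (m : nat) (u : 'M[K]_d) (t : nat -> 'M[K]_d) : seq 'M[K]_d :=
  if (2 <= m)%N then u :: [seq t i | i <- iota 1 m.-1] else [::].

Definition stable_under (gs : seq 'M[K]_d) (U : 'M[K]_d) : bool :=
  all (fun g => (U *m g <= U)%MS) gs.

Definition simple_sub (gs : seq 'M[K]_d) (U : 'M[K]_d) : Prop :=
  [/\ stable_under gs U, (0 < \rank U)%N &
      forall W : 'M[K]_d, stable_under gs W -> (W <= U)%MS ->
        \rank W = 0%N \/ (W == U)%MS].

Definition is_socle (gs : seq 'M[K]_d) (S : 'M[K]_d) : Prop :=
  [/\ forall U, simple_sub gs U -> (U <= S)%MS
    & exists Us : seq 'M[K]_d,
        (forall U, U \in Us -> simple_sub gs U) /\
        (S == \sum_(U <- Us) U)%MS].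

End Hecke.

Definition HD_split (K : fieldType) (q : K) (m : nat) : Prop :=
  forall (d : nat) (u : 'M[K]_d) (t : nat -> 'M[K]_d),
    HD_rel q m u t ->
    simple_sub (Dgens m u t) 1%:M ->
    forall X : 'M[K]_d,
      (forall g, g \in Dgens m u t -> g *m X = X *m g) ->
      exists c : K, X = c%:M.

(* Main.v *)
Require Import Defs.
From HB Require Import structures.
From mathcomp Require Import all_boot all_order all_algebra zify.
From Stdlib Require Import Classical.
Set Implicit Arguments.
Unset Strict Implicit.
Unset Printing Implicit Defensive.
Import GRing.Theory.
Local Open Scope ring_scope.



Lemma stableP (K : fieldType) d (gs : seq 'M[K]_d) U :
  reflect (forall h, h \in gs -> (U *m h <= U)%MS) (stable_under gs U).
Proof. exact: allP. Qed.

Lemma stable0 (K : fieldType) d (gs : seq 'M[K]_d) : stable_under gs 0.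
Proof. by apply/stableP => h _; rewrite mul0mx sub0mx. Qed.

Lemma stable_adds (K : fieldType) d (gs : seq 'M[K]_d) U V :
  stable_under gs U -> stable_under gs V -> stable_under gs (U + V)%MS.
Proof.
move=> /stableP sU /stableP sV; apply/stableP => h hg.
by rewrite addsmxMr addsmxS ?sU ?sV.
Qed.

Lemma stable_cap (K : fieldType) d (gs : seq 'M[K]_d) U V :
  stable_under gs U -> stable_under gs V -> stable_under gs (U :&: V)%MS.
Proof.
move=> /stableP sU /stableP sV; apply/stableP => h hg.
rewrite sub_capmx; apply/andP; split.
  by apply: submx_trans (sU h hg); apply: submxMr; apply: capmxSl.
by apply: submx_trans (sV h hg); apply: submxMr; apply: capmxSr.
Qed.

Lemma exists_simple (K : fieldType) d (gs : seq 'M[K]_d) X :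
  stable_under gs X -> (0 < \rank X)%N ->
  exists U, simple_sub gs U /\ (U <= X)%MS.
Proof.
move: {2}(\rank X).+1 (ltnSn (\rank X)) => N.
elim: N X => [|N IH] X //= ltXN sX rX.
case: (classic (exists W : 'M[K]_d,
   [/\ stable_under gs W, (W <= X)%MS, \rank W != 0%N & ~~ (W == X)%MS])).
  case=> W [sW WX rW nWX].
  have ltW : (\rank W < \rank X)%N.
    by rewrite ltn_neqAle (mxrank_leqif_eq WX) nWX mxrankS.
  have [||U [sU UW]] := IH W _ sW; [|by rewrite lt0n|].
    exact: leq_trans ltW ltXN.
  by exists U; split=> //; apply: submx_trans WX.
move=> H; exists X; split=> //; split=> // W sW WX.
case: (eqVneq (\rank W) 0%N) => [|rW]; first by left.
case: (boolP (W == X)%MS) => [|nWX]; first by right.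
by case: H; exists W.
Qed.

Lemma sum_sub (K : fieldType) d (Us : seq 'M[K]_d) (F : 'M[K]_d -> 'M[K]_d) (B : 'M[K]_d) :
  (forall U, U \in Us -> (F U <= B)%MS) -> ((\sum_(U <- Us) F U)%MS <= B)%MS.
Proof.
elim: Us => [|U Us IH] H; first by rewrite big_nil sub0mx.
rewrite big_cons addsmx_sub H ?mem_head //= IH // => V V_in.
by apply: H; rewrite inE V_in orbT.
Qed.

Lemma sub_sum (K : fieldType) d (Us : seq 'M[K]_d) (F : 'M[K]_d -> 'M[K]_d) (U : 'M[K]_d) :
  U \in Us -> (F U <= (\sum_(V <- Us) F V)%MS)%MS.
Proof.
elim: Us => [|V Us IH] //; rewrite inE big_cons => /orP[/eqP->|/IH H].
  exact: addsmxSl.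
by apply: submx_trans H _; apply: addsmxSr.
Qed.

Lemma sum_mono (K : fieldType) d (Us : seq 'M[K]_d) (F G : 'M[K]_d -> 'M[K]_d) :
  (forall U, U \in Us -> (F U <= G U)%MS) ->
  ((\sum_(U <- Us) F U)%MS <= (\sum_(U <- Us) G U)%MS)%MS.
Proof.
move=> H; apply: sum_sub => U Ui; apply: submx_trans (H U Ui) _.
exact: sub_sum.
Qed.



Lemma ggK (K : fieldType) d (g U : 'M[K]_d) : g *m g = 1%:M -> U *m g *m g = U.
Proof. by move=> Hg; rewrite -mulmxA Hg mulmx1. Qed.

Lemma rank_g (K : fieldType) d (g U : 'M[K]_d) : g *m g = 1%:M ->
  \rank (U *m g) = \rank U.
Proof.
move=> Hg; apply/eqP; rewrite eqn_leq mxrankM_maxl /=.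
by rewrite -{1}(ggK U Hg) mxrankM_maxl.
Qed.

Lemma stable_g (K : fieldType) d (gs : seq 'M[K]_d) (g U : 'M[K]_d) :
  g *m g = 1%:M -> (forall h, h \in gs -> g *m h *m g \in gs) ->
  stable_under gs U -> stable_under gs (U *m g).
Proof.
move=> Hg Hc /stableP sU; apply/stableP => h hg.
have -> : U *m g *m h = U *m (g *m h *m g) *m g.
  by rewrite !mulmxA ggK.
by apply: submxMr; apply: sU; apply: Hc.
Qed.

Lemma simple_g (K : fieldType) d (gs : seq 'M[K]_d) (g U : 'M[K]_d) :
  g *m g = 1%:M -> (forall h, h \in gs -> g *m h *m g \in gs) ->
  simple_sub gs U -> simple_sub gs (U *m g).
Proof.
move=> Hg Hc [sU rU HU]; split; first exact: stable_g.
  by rewrite rank_g.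
move=> W sW WU.
have WgU : (W *m g <= U)%MS by rewrite -(ggK U Hg) submxMr.
case: (HU (W *m g) (stable_g Hg Hc sW) WgU).
  by rewrite rank_g //; left.
case/andP => h1 h2; right; apply/andP; split.
  by rewrite -(ggK W Hg) submxMr.
by rewrite -(ggK W Hg); apply: submxMr.
Qed.



Lemma proj_lin (K : fieldType) d (U Y X h : 'M[K]_d) :
  (U :&: Y)%MS = 0 -> (U *m h <= U)%MS -> (Y *m h <= Y)%MS ->
  (X <= U + Y)%MS ->
  X *m proj_mx U Y *m h = X *m h *m proj_mx U Y.
Proof.
move=> dx sU sY XV.
have eX : X *m h = X *m proj_mx U Y *m h + (X - X *m proj_mx U Y) *m h.
  by rewrite -mulmxDl addrC subrK.
have h1 : (X *m proj_mx U Y *m h <= U)%MS.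
  by apply: submx_trans sU; apply: submxMr; exact: proj_mx_sub.
have h2 : ((X - X *m proj_mx U Y) *m h <= Y)%MS.
  by apply: submx_trans sY; apply: submxMr; exact: proj_mx_compl_sub.
by rewrite eX mulmxDl (proj_mx_id dx h1) (proj_mx_0 dx h2) addr0.
Qed.

Lemma proj_g (K : fieldType) d (U X g : 'M[K]_d) :
  g *m g = 1%:M -> (U :&: U *m g)%MS = 0 -> (X <= U + U *m g)%MS ->
  X *m g *m proj_mx U (U *m g) = (X - X *m proj_mx U (U *m g)) *m g.
Proof.
move=> Hg dx XV.
have eX : X *m g = X *m proj_mx U (U *m g) *m g + (X - X *m proj_mx U (U *m g)) *m g.
  by rewrite -mulmxDl addrC subrK.
have h1 : (X *m proj_mx U (U *m g) *m g <= U *m g)%MS.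
  by apply: submxMr; exact: proj_mx_sub.
have h2 : ((X - X *m proj_mx U (U *m g)) *m g <= U)%MS.
  by have := submxMr g (proj_mx_compl_sub XV); rewrite ggK.
by rewrite eX mulmxDl (proj_mx_0 dx h1) (proj_mx_id dx h2) add0r.
Qed.

Lemma sig_g (K : fieldType) d (U X g : 'M[K]_d) :
  g *m g = 1%:M -> (U :&: U *m g)%MS = 0 -> (X <= U + U *m g)%MS ->
  let s := 2%:R *: proj_mx U (U *m g) - 1%:M in
  X *m s *m g = - (X *m g *m s).
Proof.
move=> Hg dx XV s.
rewrite /s !mulmxBr !mulmx1 -!scalemxAr (proj_g Hg dx XV) mulmxBl.
rewrite -!scalemxAl.
rewrite !scaler_nat !mulr2n.
rewrite mulmxBl.
set A := X *m g; set B := X *m proj_mx U (U *m g) *m g.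
by rewrite opprB opprD !opprB addrACA addrCA addNKr.
Qed.



Lemma ar1 (a b c e : nat) : c = (b + b)%N -> (a + b <= c)%N -> (c <= a + e)%N ->
  (e <= a)%N -> a = b.
Proof. lia. Qed.
Lemma ar2 (a b c e : nat) : c = (b + b)%N -> (c <= a + e)%N -> a = b -> (0 < b)%N ->
  (0 < e)%N.
Proof. lia. Qed.
Lemma ar3 (a b c e : nat) : c = (b + b)%N -> (e <= a)%N -> a = b -> (0 < b)%N ->
  (c <= e)%N -> False.
Proof. lia. Qed.

Lemma decomp (K : fieldType) d (gs hs : seq 'M[K]_d) (g U : 'M[K]_d) :
  g *m g = 1%:M -> (forall h, h \in gs -> g *m h *m g \in gs) ->
  (forall W, stable_under hs W = stable_under gs W && (W *m g <= W)%MS) ->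
  (2%:R : K) != 0 ->
  simple_sub gs U ->
  exists Ls : seq 'M[K]_d, (forall L, L \in Ls -> simple_sub hs L) /\
     ((U + U *m g)%MS == (\sum_(L <- Ls) L)%MS)%MS.
Proof.
move=> Hg Hc Hhs H2 simU.
have [sU rU HU] := simU.
have simUg := simple_g Hg Hc simU; have [sUg rUg HUg] := simUg.
set V := (U + U *m g)%MS.
have sVg : (V *m g <= V)%MS.
  rewrite addsmxMr addsmx_sub addsmxSr /= ggK //; exact: addsmxSl.
have sV : stable_under hs V by rewrite Hhs sVg andbT stable_adds.
have rV : (0 < \rank V)%N by apply: leq_trans rU _; apply: mxrankS; apply: addsmxSl.
have [W [simW WV]] := exists_simple sV rV.
have hsg : forall X, stable_under hs X -> stable_under gs X /\ (X *m g <= X)%MS.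
  by move=> X; rewrite Hhs => /andP.
case: (boolP (V <= W)%MS) => VW.
  exists [:: W]; split; first by move=> L; rewrite inE => /eqP ->.
  by rewrite big_seq1; apply/andP.
have [sWh rW HW] := simW; have [sW WgW] := hsg W sWh.
have dx : (U :&: U *m g)%MS = 0.
  case: (HU _ (stable_cap sU sUg) (capmxSl _ _)) => [r0|/andP[_ UUg]].
    by apply/eqP; rewrite -mxrank_eq0; apply/eqP.
  have UUg' : (U <= U *m g)%MS by apply: submx_trans UUg (capmxSr _ _).
  have [_] := mxrank_leqif_sup UUg'; rewrite rank_g // eqxx => /esym UgU.
  have WU : (W <= U)%MS by apply: submx_trans WV _; rewrite addsmx_sub submx_refl.
  case: (HU W sW WU) => [r0|/andP[_ UW]]; first by rewrite r0 in rW.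
  by move: VW; rewrite (submx_trans _ UW) // addsmx_sub submx_refl.
set pi := proj_mx U (U *m g).
set s := 2%:R *: pi - 1%:M.
have eS : forall X : 'M[K]_d, X *m s = 2%:R *: (X *m pi) - X.
  by move=> X; rewrite /s mulmxBr mulmx1 -scalemxAr.
have key : forall X, stable_under hs X -> (X <= V)%MS -> (0 < \rank X)%N ->
    ~~ (V <= X)%MS ->
    [/\ stable_under hs (X *m s), (X *m s <= V)%MS, (V <= X + X *m s)%MS
      & \rank X = \rank U].
  move=> X sXh XV rX VX; have [sX XgX] := hsg X sXh.
  have cU : (X :&: U)%MS = 0.
    case: (HU _ (stable_cap sX sU) (capmxSr _ _)) => [r0|/andP[_ UX]].
      by apply/eqP; rewrite -mxrank_eq0; apply/eqP.
    have UX' : (U <= X)%MS by apply: submx_trans UX (capmxSl _ _).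
    have UgX : (U *m g <= X)%MS by apply: submx_trans XgX; apply: submxMr.
    by move: VX; rewrite addsmx_sub UX' UgX.
  have cUg : (X :&: U *m g)%MS = 0.
    case: (HUg _ (stable_cap sX sUg) (capmxSr _ _)) => [r0|/andP[_ UX]].
      by apply/eqP; rewrite -mxrank_eq0; apply/eqP.
    have UgX : (U *m g <= X)%MS by apply: submx_trans UX (capmxSl _ _).
    have UX' : (U <= X)%MS.
      by apply: submx_trans XgX; rewrite -{1}(ggK U Hg); apply: submxMr.
    by move: VX; rewrite addsmx_sub UX' UgX.
  have pl : forall (Y : 'M[K]_d) h, (Y <= V)%MS -> h \in gs -> Y *m pi *m h = Y *m h *m pi.
    move=> Y h YV hh; rewrite /pi; apply: (proj_lin dx) => //.
      by move/stableP: sU; apply.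
    by move/stableP: sUg; apply.
  have sXpi : stable_under gs (X *m pi).
    apply/stableP => h hh; rewrite pl //; apply: submxMr.
    by move/stableP: sX; apply.
  have UXpi : (U <= X *m pi)%MS.
    case: (HU _ sXpi (proj_mx_sub _ _ _)) => [r0|/andP[] //].
    have Xpi0 : X *m pi = 0 by apply/eqP; rewrite -mxrank_eq0; apply/eqP.
    have XUg : (X <= U *m g)%MS.
      by have := proj_mx_compl_sub XV; rewrite -/pi Xpi0 subr0.
    have : (X <= X :&: U *m g)%MS by rewrite sub_capmx submx_refl.
    rewrite cUg submx0 -mxrank_eq0 => /eqP r0'.
    by rewrite r0' in rX.
  have sXs : stable_under hs (X *m s).
    rewrite Hhs; apply/andP; split.
      apply/stableP => h hh.
      have -> : X *m s *m h = X *m h *m s.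
        by rewrite (eS X) (eS (X *m h)) mulmxBl -scalemxAl pl.
      apply: submxMr.
      by move/stableP: sX; apply.
    by rewrite (sig_g Hg dx XV) eqmx_opp submxMr.
  have XsV : (X *m s <= V)%MS.
    rewrite eS addmx_sub ?eqmx_opp // scalemx_sub //.
    by apply: submx_trans (proj_mx_sub _ _ _) _; apply: addsmxSl.
  have cov : (V <= X + X *m s)%MS.
    have UXX : (U <= X + X *m s)%MS.
      apply: submx_trans UXpi _.
      have -> : X *m pi = 2%:R^-1 *: (X + X *m s).
        by rewrite eS addrC subrK scalerA mulVf // scale1r.
      by rewrite scalemx_sub // addmx_sub_adds ?submx_refl.
    have sXX : stable_under hs (X + X *m s)%MS by apply: stable_adds.
    have [_ gXX] := hsg _ sXX.
    rewrite addsmx_sub UXX /=; apply: submx_trans gXX; exact: submxMr.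
  split=> //.
  have rkV : \rank V = (\rank U + \rank U)%N.
    by rewrite /V mxrank_disjoint_sum // rank_g.
  have rk1 : (\rank X + \rank U <= \rank V)%N.
    rewrite -mxrank_disjoint_sum //; apply: mxrankS.
    by rewrite addsmx_sub XV addsmxSl.
  have rk2 : (\rank V <= \rank X + \rank (X *m s))%N.
    apply: leq_trans (mxrankS cov) _; exact: (mxrank_adds_leqif _ _).1.
  have rk3 : (\rank (X *m s) <= \rank X)%N by apply: mxrankM_maxl.
  exact: ar1 rkV rk1 rk2 rk3.
have simple_of : forall X, stable_under hs X -> (X <= V)%MS -> (0 < \rank X)%N ->
    ~~ (V <= X)%MS -> simple_sub hs X.
  move=> X sX XV rX VX; split=> // Y sY YX.
  case: (eqVneq (\rank Y) 0%N) => [|rY]; first by left.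
  right.
  have YV : (Y <= V)%MS by apply: submx_trans XV.
  have VY : ~~ (V <= Y)%MS.
    by apply: contra VX => VY; apply: submx_trans YX.
  have [_ _ _ e1] := key X sX XV rX VX.
  have rY' : (0 < \rank Y)%N by rewrite lt0n.
  have [_ _ _ e2] := key Y sY YV rY' VY.
  by rewrite -(mxrank_leqif_eq YX).2 e1 e2.
have [sW2 W2V cov rkW] := key W sWh WV rW VW.
exists [:: W; W *m s]; split.
  move=> L; rewrite !inE => /orP[/eqP->|/eqP->] //.
  have rkV : \rank V = (\rank U + \rank U)%N.
    by rewrite /V mxrank_disjoint_sum // rank_g.
  have rk2 : (\rank V <= \rank W + \rank (W *m s))%N.
    apply: leq_trans (mxrankS cov) _; exact: (mxrank_adds_leqif _ _).1.
  have rk3 : (\rank (W *m s) <= \rank W)%N by apply: mxrankM_maxl.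
  apply: simple_of => //; first exact: ar2 rkV rk2 rkW rU.
  apply/negP => VW2; exact: ar3 rkV rk3 rkW rU (mxrankS VW2).
rewrite big_cons big_seq1; apply/andP; split=> //.
by rewrite addsmx_sub WV.
Qed.



Lemma hs_split (K : fieldType) d (gs hs : seq 'M[K]_d) (g V : 'M[K]_d) :
  g *m g = 1%:M -> (forall h, h \in gs -> g *m h *m g \in gs) ->
  (forall W, stable_under hs W = stable_under gs W && (W *m g <= W)%MS) ->
  simple_sub hs V -> exists W, simple_sub gs W /\ (V <= W + W *m g)%MS.
Proof.
move=> Hg Hc Hhs [sVh rV HV].
have := sVh; rewrite Hhs => /andP[sV VgV].
have [W [simW WV]] := exists_simple sV rV.
have [sW rW _] := simW.
exists W; split => //.
have sX : stable_under hs (W + W *m g)%MS.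
  rewrite Hhs stable_adds ?(stable_g Hg Hc) //=.
  by rewrite addsmxMr addsmx_sub addsmxSr /= ggK // addsmxSl.
have XV : (W + W *m g <= V)%MS.
  by rewrite addsmx_sub WV /=; apply: submx_trans VgV; apply: submxMr.
case: (HV _ sX XV) => [r0|/andP[] //].
have := mxrankS (addsmxSl W (W *m g)); rewrite r0 leqn0 => /eqP r0'.
by rewrite r0' in rW.
Qed.

Lemma socle_equiv (K : fieldType) d (gs hs : seq 'M[K]_d) (g S : 'M[K]_d) :
  g *m g = 1%:M -> (forall h, h \in gs -> g *m h *m g \in gs) ->
  (forall W, stable_under hs W = stable_under gs W && (W *m g <= W)%MS) ->
  (2%:R : K) != 0 ->
  is_socle gs S <-> is_socle hs S.
Proof.
move=> Hg Hc Hhs H2; split.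
  move=> [Hsimp [Us [HUs /andP[SU _]]]].
  have subS : forall V, simple_sub hs V -> (V <= S)%MS.
    move=> V simV; have [W [simW VW]] := hs_split Hg Hc Hhs simV.
    apply: submx_trans VW _; rewrite addsmx_sub Hsimp //.
    by apply: Hsimp; apply: simple_g.
  split; first exact: subS.
  have build : forall Us' : seq 'M[K]_d, (forall U, U \in Us' -> simple_sub gs U) ->
      exists Ls : seq 'M[K]_d, (forall L, L \in Ls -> simple_sub hs L) /\
      ((\sum_(U <- Us') (U + U *m g))%MS <= (\sum_(L <- Ls) L)%MS)%MS.
    elim=> [|U Us' IH] H.
      by exists [::]; split => //; rewrite big_nil sub0mx.
    have [Ls1 [HL1 /andP[e1 _]]] := decomp Hg Hc Hhs H2 (H U (mem_head _ _)).
    have [|Ls2 [HL2 e2]] := IH; first by move=> V Vi; apply: H; rewrite inE Vi orbT.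
    exists (Ls1 ++ Ls2); split.
      by move=> L; rewrite mem_cat => /orP[/HL1|/HL2].
    by rewrite big_cons big_cat /= addsmxS.
  have [Ls [HL e]] := build Us HUs.
  exists Ls; split => //; apply/andP; split.
    apply: submx_trans SU _; apply: submx_trans e.
    by apply: sum_mono => U _; apply: addsmxSl.
  by apply: sum_sub => L Li; apply: subS; apply: HL.
move=> [Hsimp [Vs [HVs /andP[SV _]]]].
have subS : forall U, simple_sub gs U -> (U <= S)%MS.
  move=> U simU; have [Ls [HL /andP[e _]]] := decomp Hg Hc Hhs H2 simU.
  apply: submx_trans (addsmxSl U (U *m g)) _; apply: submx_trans e _.
  by apply: sum_sub => L Li; apply: Hsimp; apply: HL.
split; first exact: subS.
have build : forall Vs' : seq 'M[K]_d, (forall V, V \in Vs' -> simple_sub hs V) ->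
    exists Us : seq 'M[K]_d, (forall U, U \in Us -> simple_sub gs U) /\
    ((\sum_(V <- Vs') V)%MS <= (\sum_(U <- Us) U)%MS)%MS.
  elim=> [|V Vs' IH] H.
    by exists [::]; split => //; rewrite big_nil sub0mx.
  have [W [simW e1]] := hs_split Hg Hc Hhs (H V (mem_head _ _)).
  have [|Us2 [HU2 e2]] := IH; first by move=> V' Vi; apply: H; rewrite inE Vi orbT.
  exists [:: W, W *m g & Us2]; split.
    move=> U; rewrite !inE => /orP[/eqP->//|/orP[/eqP->|/HU2//]].
    exact: simple_g.
  by rewrite !big_cons addsmxA addsmxS.
have [Us [HU e]] := build Vs HVs.
exists Us; split => //; apply/andP; split.
  exact: submx_trans SV e.
by apply: sum_sub => U Ui; apply: subS; apply: HU.
Qed.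

Unset Implicit Arguments.
Set Strict Implicit.

Theorem mainTheorem2 (K : fieldType) (q : K) (n : nat) :
  ~~ (2 \in [pchar K])%N -> q != 0 -> (1 <= n)%N ->
  HD_split q n -> HD_split q n.-1 ->
  forall (d : nat) (t : nat -> 'M[K]_d),
    HB_rel q n t ->
    simple_sub (Bgens n t) 1%:M ->
    forall S : 'M[K]_d,
      is_socle (Dgens_in_B n.-1 t) S <-> is_socle (Bgens n.-1 t) S.
Proof.
move=> H2c _ n1 _ _ d t HB _ S.
have H2 : (2%:R : K) != 0.
  by move: H2c; rewrite inE /=.
case: n n1 HB => [//|m] _ [H0 Hq Hbr Hbr2 Hcomm] /=.
have {}H0 : t 0%N *m t 0%N = 1%:M by apply: H0.
case: m Hq Hbr Hbr2 Hcomm => [|m] Hq Hbr Hbr2 Hcomm.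
  by rewrite /Dgens_in_B /Bgens /=.
apply: (@socle_equiv K d _ _ (t 0%N) S) => //.
  case: m Hq Hbr Hbr2 Hcomm => [|m] Hq Hbr Hbr2 Hcomm.
    by [].
  move=> h; rewrite /Dgens_in_B /= !inE => /orP[/eqP->|/orP[/eqP->|hin]].
  - rewrite !mulmxA H0 mul1mx -mulmxA H0 mulmx1.
    by rewrite eqxx orbT.
  - by rewrite eqxx.
  - case/mapP: hin => i; rewrite mem_iota => /andP[i2 im] ->.
    rewrite Hcomm; last by rewrite i2 /=; apply: (leq_trans im); rewrite add2n ltnS leqnSn.
    rewrite -mulmxA H0 mulmx1.
    by rewrite (map_f t) ?mem_iota ?i2 ?im ?orbT.
case: m Hq Hbr Hbr2 Hcomm => [|m] Hq Hbr Hbr2 Hcomm W.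
  by rewrite /stable_under /Dgens_in_B /Bgens /= andbT.
rewrite /stable_under /Dgens_in_B /Bgens /=.
set R := all _ _.
case Ha: (W *m t 0%N <= W)%MS; case Hb: (W *m t 1%N <= W)%MS;
  rewrite /= ?andbF ?andbT //.

have -> : (W *m (t 0%N *m t 1%N *m t 0%N) <= W)%MS.
  rewrite !mulmxA.
  exact: (submx_trans (submxMr _ (submx_trans (submxMr _ Ha) Hb)) Ha).
by [].
Qed.
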